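(* Assume $f(0)>\frac34$. There exist $U<0$ and constants $0<c\le C$ such that the following holds for every $u_0<U$, every $s\in[0,1]$ and every smooth function $\phi$ on $\overline{\Omega_{u_0}}$ (up to $R=0$): $$c\,I_s(\phi)\le\mathcal E_{\mathcal H_{s,u_0}}(\phi)\le C\,I_s(\phi),$$ where $$I_s(\phi)=\int_{]-\infty,u_0[\times S^2}\Big(u^2(\partial_u\phi)^2+\frac{R}{|u|}(\partial_R\phi)^2+|\nabla_{S^2}\phi|^2\Big)du\,d^2\omega,$$ the integrand being evaluated on $\mathcal H_{s,u_0}$.
   Context: Let $a>0$ and let $f$ be an analytic positive function on $[0,a)$. On a manifold with coordinates $(u,R,\omega)\in\mathbb R\times[0,a)\times S^2$ consider $$\hat g=R^2f(R)\,du^2-2\,du\,dR-d\omega^2,$$ with future null infinity $\mathscr I^+=\{R=0\}$ and the time orientation in which $\partial_u$ is future-directed on $\mathscr I^+$. Put $r=1/R$, fix $r_*$ with $\frac{dr_*}{dr}=\frac1{f(1/r)}$, and set $t=u+r_*$. Regions, for $u_0<0$: - $\Omega_{u_0}=\{t\ge0\}\cap\{u<u_0\}$; - for $0<s\le1$, $\mathcal H_{s,u_0}=\{u=-sr_*\}\cap\{u<u_0\}$; - $\mathcal H_{0,u_0}=\{R=0,\ u<u_0\}$. Each $\mathcal H_{s,u_0}$ is parametrised by $(u,\omega)$. $d^2\omega$ and $\nabla_{S^2}$ are the area form and gradient of the unit sphere. Energy flux. Let $T_{ab}(\phi)=\hat\nabla_a\phi\hat\nabla_b\phi-\frac12\hat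 g^{cd}\hat\nabla_c\phi\hat\nabla_d\phi\,\hat g_{ab}$ and $K=u^2\partial_u-2(1+uR)\partial_R$. The flux $\mathcal E_\Sigma(\phi)=\int_\Sigma K^bT_{ab}(\phi)\tilde n^a\,d\mu$ uses: - a future-directed normal $\tilde n$ to $\Sigma$; - a transverse $\tilde l$ with $\hat g(\tilde l,\tilde n)=1$; - the positive measure $d\mu$ induced by $\tilde l\lrcorner(du\wedge dR\wedge d^2\omega)$. Explicitly, for $0<s\le1$, the integrand being evaluated on $\mathcal H_{s,u_0}$: $$\mathcal E_{\mathcal H_{s,u_0}}(\phi)=\int_{]-\infty,u_0[\times S^2}\Big(R^2u^2f(R)\,\partial_u\phi\,\partial_R\phi+u^2(\partial_u\phi)^2$$ $$+\Big(\frac{R^4u^2f(R)^2}{2s}+R^3f(R)(2-s)\frac us+\frac{R^2f(R)(2-s)}{s}\Big)(\partial_R\phi)^2$$ $$+\Big(\frac{R^2u^2f(R)}{2s}+Ru+1\Big)|\nabla_{S^2}\phi|^2\Big)du\,d^2\omega.$$ For $s=0$: $$\mathcal E_{\mathcal H_{0,u_0}}(\phi)=\int_{]-\infty,u_0[\times S^2}\big(u^2(\partial_u\phi)^2+|\nabla_{S^2}\phi|^2\big)du\,d^2\omega.$$ *)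

(* Defs.v *)
From HB Require Import structures.
From mathcomp Require Import all_boot all_order all_algebra.
From mathcomp Require Import all_classical all_reals all_analysis.
Set Implicit Arguments. Unset Strict Implicit. Unset Printing Implicit Defensive.
Import Order.TTheory GRing.Theory Num.Theory.
Import numFieldNormedType.Exports.
Local Open Scope classical_set_scope.
Local Open Scope ring_scope.

Section Defs.
Variable R : realType.

Definition analytic_on_0a (f : R -> R) (a : R) : Prop :=
  forall x0, 0 <= x0 < a ->
    exists2 d : R, 0 < d & exists c : nat -> R,
      forall x, 0 <= x < a -> `|x - x0| < d ->
        (fun n : nat => \sum_(k < n) c k * (x - x0) ^+ k) @ \oo --> f x.

(** Coordinates (u, R, x1, x2, x3) on R^5, omega = (x1,x2,x3) in S^2 embedded
    in R^3.  The unit coordinate vectors. *)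
Definition ev (i : nat) : 'rV[R]_5 := \row_(j < 5) ((j : nat) == i)%:R.

Definition pt (u r w1 w2 w3 : R) : 'rV[R]_5 :=
  \row_(j < 5) [:: u; r; w1; w2; w3]`_j.

Fixpoint Cn (n : nat) (g : 'rV[R]_5 -> R) : Prop :=
  match n with
  | 0 => continuous g
  | n.+1 => (forall (i : nat) x, (i < 5)%N -> derivable g x (ev i)) /\
            (forall i : nat, (i < 5)%N -> Cn n (fun x => 'D_(ev i) g x))
  end.
Definition smooth (g : 'rV[R]_5 -> R) : Prop := forall n, Cn n g.

Definition d_u (phi : 'rV[R]_5 -> R) u r w1 w2 w3 := 'D_(ev 0) phi (pt u r w1 w2 w3).
Definition d_R (phi : 'rV[R]_5 -> R) u r w1 w2 w3 := 'D_(ev 1) phi (pt u r w1 w2 w3).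

(** |grad_{S^2} phi|^2 at a point with omega = (w1,w2,w3) on the unit sphere:
    squared norm of the tangential projection of the ambient R^3-gradient. *)
Definition grad_S2_sq (phi : 'rV[R]_5 -> R) u r w1 w2 w3 : R :=
  let g1 := 'D_(ev 2) phi (pt u r w1 w2 w3) in
  let g2 := 'D_(ev 3) phi (pt u r w1 w2 w3) in
  let g3 := 'D_(ev 4) phi (pt u r w1 w2 w3) in
  g1 ^+ 2 + g2 ^+ 2 + g3 ^+ 2 - (w1 * g1 + w2 * g2 + w3 * g3) ^+ 2.

(** Integral over ]-oo,u0[ x S^2 with respect to du d^2omega; the sphere is
    parametrised by spherical coordinates, d^2omega = sin th dth dph. *)
Definition int_u_S2 (u0 : R) (G : R -> R -> R -> R -> R) : \bar R :=
  (\int[lebesgue_measure]_(u in [set u : R | (u < u0)%R])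
    (\int[lebesgue_measure]_(th in [set th : R | (0 <= th <= pi)%R])
      (\int[lebesgue_measure]_(ph in [set ph : R | (0 <= ph <= 2 * pi)%R])
         ((G u (sin th * cos ph) (sin th * sin ph) (cos th) * sin th)%R)%:E)))%E.

(** Energy flux density through H_{s,u0} (explicit formulas of the paper);
    r is the R-coordinate of the point of H_{s,u0} above u. *)
Definition E_dens (f : R -> R) (s u r du dR g : R) : R :=
  if s == 0 then u ^+ 2 * du ^+ 2 + g
  else r ^+ 2 * u ^+ 2 * f r * du * dR + u ^+ 2 * du ^+ 2
     + (r ^+ 4 * u ^+ 2 * (f r) ^+ 2 / (2 * s)
        + r ^+ 3 * f r * (2 - s) * u / s
        + r ^+ 2 * f r * (2 - s) / s) * dR ^+ 2
     + (r ^+ 2 * u ^+ 2 * f r / (2 * s) + r * u + 1) * g.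

Definition I_dens (u r du dR g : R) : R :=
  u ^+ 2 * du ^+ 2 + r / `|u| * dR ^+ 2 + g.

Definition energy (f : R -> R) (s u0 : R) (Rs : R -> R) (phi : 'rV[R]_5 -> R) :=
  int_u_S2 u0 (fun u w1 w2 w3 =>
    E_dens f s u (Rs u) (d_u phi u (Rs u) w1 w2 w3) (d_R phi u (Rs u) w1 w2 w3)
      (grad_S2_sq phi u (Rs u) w1 w2 w3)).

Definition I_norm (u0 : R) (Rs : R -> R) (phi : 'rV[R]_5 -> R) :=
  int_u_S2 u0 (fun u w1 w2 w3 =>
    I_dens u (Rs u) (d_u phi u (Rs u) w1 w2 w3) (d_R phi u (Rs u) w1 w2 w3)
      (grad_S2_sq phi u (Rs u) w1 w2 w3)).

(** Rs parametrises H_{s,u0} = {u = - s r_*} /\ {u < u0} (s > 0), resp.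
    H_{0,u0} = {R = 0, u < u0}. *)
Definition H_param (a : R) (rstar : R -> R) (s u0 : R) (Rs : R -> R) : Prop :=
  if s == 0 then forall u, u < u0 -> Rs u = 0
  else forall u, u < u0 -> 0 < Rs u < a /\ u = - s * rstar (Rs u)^-1.

End Defs.

(* Main.v *)
Require Import Defs.
From HB Require Import structures.
From mathcomp Require Import all_boot all_order all_algebra.
From mathcomp Require Import all_classical all_reals all_analysis.
Import Order.TTheory GRing.Theory Num.Theory.
Import numFieldNormedType.Exports.
Local Open Scope classical_set_scope.
Local Open Scope ring_scope.

From mathcomp Require Import ring lra.
Set Implicit Arguments. Unset Strict Implicit. Unset Printing Implicit Defensive.
Section IntLemmas.
Context (R : realType).
Local Open Scope ereal_scope.
Import HBNNSimple.
Lemma nn_le_int (D : set R) (f g : R -> \bar R) :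
  (forall x, D x -> 0 <= f x) -> (forall x, D x -> f x <= g x) ->
  \int[lebesgue_measure]_(x in D) f x <= \int[lebesgue_measure]_(x in D) g x.
Proof.
move=> f0 fg.
have g0 : forall x, D x -> 0 <= g x by move=> x Dx; exact: le_trans (f0 x Dx) (fg x Dx).
rewrite !ge0_integralE//; apply: ereal_sup_le => _ [h /= hf <-].
exists h => //= x; apply: le_trans (hf x) _.
by rewrite /patch; case: ifP => // /set_mem Dx; exact: fg.
Qed.

Lemma nn_int_scale (D : set R) (f : R -> \bar R) (k : R) : (0 < k)%R ->
  (forall x, D x -> 0 <= f x) ->
  \int[lebesgue_measure]_(x in D) (k%:E * f x) = k%:E * \int[lebesgue_measure]_(x in D) f x.
Proof.
move=> k0 f0.
have kf0 : forall x, D x -> 0 <= k%:E * f x by move=> x Dx; rewrite mule_ge0// ?f0// lee_fin ltW.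
rewrite !ge0_integralE// -ereal_supZl; last 2 first.
- apply/set0P; exists 0; exists nnsfun0; last exact: sintegral0.
  by move=> x /=; rewrite /patch; case: ifP => // /set_mem Dx; exact: f0.
- exact: ltW.
congr ereal_sup; apply/seteqP; split => z /=.
- move=> [h /= hf <-].
  have ki : (0 <= k^-1)%R by rewrite invr_ge0 ltW.
  exists (sintegral lebesgue_measure (scale_nnsfun h ki)).
    exists (scale_nnsfun h ki) => //= x.
    have := hf x; rewrite /patch; case: ifP => _ //=.
      move=> hx; rewrite EFinM; apply: le_trans (lee_wpmul2l _ hx) _; first by rewrite lee_fin.
      by rewrite muleA -EFinM mulVf ?mul1e // lt0r_neq0.
    move=> hx; have -> : h x = 0%R by apply/le_anti; rewrite fun_ge0 -lee_fin hx.
    by rewrite mulr0.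
  transitivity (k%:E * (k^-1%:E * sintegral lebesgue_measure h)); first by congr (_ * _); exact: sintegralrM.
  by rewrite muleA -EFinM mulfV ?mul1e// lt0r_neq0.
- move=> [_ [h /= hf <-] <-].
  exists (scale_nnsfun h (ltW k0)) => /=.
    move=> x; have := hf x; rewrite /patch; case: ifP => _ //=.
    - move=> hx; rewrite EFinM; apply: lee_wpmul2l => //; by rewrite lee_fin ltW.
    - move=> hx; have -> : h x = 0%R by apply/le_anti; rewrite fun_ge0 -lee_fin hx.
      by rewrite mulr0.
  exact: sintegralrM.
Qed.

Lemma unit_sph (th ph : R) :
  ((sin th * cos ph) ^+ 2 + (sin th * sin ph) ^+ 2 + cos th ^+ 2 = 1)%R.
Proof.
have h1 := cos2Dsin2 ph; have h2 := cos2Dsin2 th.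
rewrite !exprMn -mulrDr h1 mulr1 addrC; exact: h2.
Qed.

Lemma int_u_S2_mono (u0 : R) (G1 G2 : R -> R -> R -> R -> R) :
  (forall u w1 w2 w3, (u < u0)%R -> (w1 ^+ 2 + w2 ^+ 2 + w3 ^+ 2 = 1)%R ->
     (0 <= G1 u w1 w2 w3)%R /\ (G1 u w1 w2 w3 <= G2 u w1 w2 w3)%R) ->
  int_u_S2 u0 G1 <= int_u_S2 u0 G2.
Proof.
move=> H; rewrite /int_u_S2.
apply: nn_le_int => [u /= uu0|u /= uu0].
  apply: integral_ge0 => th /= thp; apply: integral_ge0 => ph _.
  rewrite lee_fin mulr_ge0 ?sin_ge0_pi//; exact: (H _ _ _ _ uu0 (unit_sph _ _)).1.
apply: nn_le_int => [th /= thp|th /= thp].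
  apply: integral_ge0 => ph _.
  rewrite lee_fin mulr_ge0 ?sin_ge0_pi//; exact: (H _ _ _ _ uu0 (unit_sph _ _)).1.
apply: nn_le_int => [ph _|ph _].
  rewrite lee_fin mulr_ge0 ?sin_ge0_pi//; exact: (H _ _ _ _ uu0 (unit_sph _ _)).1.
rewrite lee_fin ler_wpM2r ?sin_ge0_pi//; exact: (H _ _ _ _ uu0 (unit_sph _ _)).2.
Qed.

Lemma int_u_S2_scale (u0 k : R) (G : R -> R -> R -> R -> R) : (0 < k)%R ->
  (forall u w1 w2 w3, (u < u0)%R -> (w1 ^+ 2 + w2 ^+ 2 + w3 ^+ 2 = 1)%R ->
     (0 <= G u w1 w2 w3)%R) ->
  int_u_S2 u0 (fun u w1 w2 w3 => k * G u w1 w2 w3)%R = k%:E * int_u_S2 u0 G.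
Proof.
move=> k0 H; rewrite /int_u_S2.
rewrite -nn_int_scale//; last first.
  move=> u /= uu0; apply: integral_ge0 => th /= thp; apply: integral_ge0 => ph _.
  rewrite lee_fin mulr_ge0 ?sin_ge0_pi//; exact: (H _ _ _ _ uu0 (unit_sph _ _)).
apply: eq_integral => u /[1!inE] /= uu0.
rewrite -nn_int_scale//; last first.
  move=> th /= thp; apply: integral_ge0 => ph _.
  rewrite lee_fin mulr_ge0 ?sin_ge0_pi//; exact: (H _ _ _ _ uu0 (unit_sph _ _)).
apply: eq_integral => th /[1!inE] /= thp.
rewrite -nn_int_scale//; last first.
  move=> ph _; rewrite lee_fin mulr_ge0 ?sin_ge0_pi//; exact: (H _ _ _ _ uu0 (unit_sph _ _)).
by apply: eq_integral => ph _; rewrite -EFinM mulrA.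
Qed.

End IntLemmas.

Section Alg.
Context (R : realType).

Lemma qf_ge0 (a b d V Z : R) : 0 < a -> b ^+ 2 <= 4 * a * d ->
  0 <= a * V ^+ 2 + b * V * Z + d * Z ^+ 2.
Proof.
move=> a0 hb.
have h : 0 <= 4 * a * (a * V ^+ 2 + b * V * Z + d * Z ^+ 2).
  have -> : 4 * a * (a * V ^+ 2 + b * V * Z + d * Z ^+ 2) =
     (2 * a * V + b * Z) ^+ 2 + (4 * a * d - b ^+ 2) * Z ^+ 2 by ring.
  by apply: addr_ge0; [exact: sqr_ge0|apply: mulr_ge0; [lra|exact: sqr_ge0]].
have a4 : 0 < 4 * a by lra.
by rewrite pmulr_rge0 in h.
Qed.

Lemma core (s k p mu V Z g : R) :
  0 < s <= 1 -> 0 < k -> k <= 4/3 - mu -> 0 < mu <= 2/3 ->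
  1 - mu/4 <= p <= 1 + mu/4 -> 0 <= g ->
  let Q := s^+2 * k * p / 2 - (2 - s) * s * k + (2 - s) in
  let B := s * k * p / 2 - s * k + 1 in
  let E := V^+2 + s^+2 * k * p * V * Z + s * k * p * Q * Z^+2 + B * g in
  let I := V^+2 + s * k * Z^+2 + g in
  mu / 60 * I <= E /\ E <= 6 * I.
Proof.
move=> /andP[s0 s1] k0 kmu /andP[mu0 mu1] /andP[p1 p2] g0 Q B E I.
set phi := s * (2 - 3/2 * s + s^+2 / 4).
have phi0 : 3/4 * s <= phi.
  rewrite /phi; have : 3/4 <= 2 - 3/2 * s + s^+2 / 4 by nra.
  move=> h; nra.
have hE : 2 - s + k * (3/2 * s^+2 - 2 * s - s^+3/4) = 2 - s - k * phi by rewrite /phi; field.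
have hh : 3/8 * mu <= 2 - s + k * (3/2 * s^+2 - 2 * s - s^+3/4).
  rewrite hE.
  have h1 : 2 - s - k * phi >= (1 - s) * (2 - s) * (3 - s) / 3 + mu * phi.
    have -> : (1 - s) * (2 - s) * (3 - s) / 3 + mu * phi = 2 - s - (4/3 - mu) * phi.
      by rewrite /phi; field.
    have : 0 <= phi by nra.
    nra.
  have h2 : 0 <= (1 - s) * (2 - s) * (3 - s) / 3.
    apply: divr_ge0; [apply: mulr_ge0; [apply: mulr_ge0|]|]; lra.
  case: (lerP s (1/2)) => hs.
  - have : 5/8 <= (1 - s) * (2 - s) * (3 - s) / 3.
      have e1 : 1/2 <= 1 - s by lra.
      have e2 : 3/2 <= 2 - s by lra.
      have e3 : 5/2 <= 3 - s by lra.
      have : 1/2 * (3/2) <= (1 - s) * (2 - s) by nra.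
      move=> e4; have : 1/2 * (3/2) * (5/2) <= (1 - s) * (2 - s) * (3 - s) by nra.
      lra.
    have : 0 <= mu * phi by nra.
    lra.
  - have : mu * (3/4 * s) <= mu * phi by nra.
    nra.
set T := (2 - s) * (1 - s * k) + s^+2 * k * p * (1/2 - s/4).
have hT : mu / 5 <= T.
  have -> : T = 2 - s + k * (3/2 * s^+2 - 2 * s - s^+3/4) + (p - 1) * (s^+2 * k * (1/2 - s/4)).
    by rewrite /T; field.
  have e1 : 0 <= s^+2 * k * (1/2 - s/4) <= 2/3.
    have : s^+2 <= 1 by nra.
    have : 0 <= s^+2 by nra.
    move=> hs2 hs1; apply/andP; split; first by apply: mulr_ge0; [nra|lra].
    have : s^+2 * k <= 4/3 by nra.
    move=> h; have : 0 <= s^+2 * k by nra.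
    nra.
  move: e1 => /andP[e1 e2].
  have : - (mu/4) * (2/3) <= (p - 1) * (s^+2 * k * (1/2 - s/4)) by nra.
  lra.
have hpT : mu / 6 <= p * T by nra.
have hpQ : p * Q - s^+3 * k * p^+2 / 4 = p * T by rewrite /Q /T; field.
have hs3 : 0 <= s^+3 * k * p^+2 by apply: mulr_ge0; [apply: mulr_ge0|]; nra.
have hs3' : s^+3 * k * p^+2 <= 2.
  have : s^+3 <= 1 by nra.
  have : p^+2 <= 49/36 by nra.
  move=> hp hs; have : 0 <= s^+3 by nra.
  move=> hs0; have : s^+3 * k <= 4/3 by nra.
  move=> h; have : 0 <= s^+3 * k by nra.
  nra.
have hQ : Q <= 25/9.
  have : s^+2 * k * p / 2 <= 7/9.
    have : s^+2 <= 1 by nra.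
    have : 0 <= s^+2 by nra.
    move=> h0 h1; have : s^+2 * k <= 4/3 by nra.
    move=> h; have : 0 <= s^+2 * k by nra.
    nra.
  have : (2 - s) * (1 - s * k) <= 2.
    have : 0 <= s * k by nra.
    nra.
  rewrite /Q; nra.
have pQ4 : p * Q <= 4 by nra.
have pQ0 : mu / 6 <= p * Q by lra.
have hB1 : 1/3 <= B.
  have : s * k * (1 - p/2) <= 2/3 - mu/3.
    have : k * (1 - p/2) <= 2/3 - mu/3 by nra.
    have : 0 <= k * (1 - p/2) by nra.
    nra.
  rewrite /B; lra.
have hB2 : B <= 2.
  have : s * k * p <= 14/9.
    have : s * k <= 4/3 by nra.
    have : 0 <= s * k by nra.
    nra.
  have : 0 <= s * k by nra.
  rewrite /B; lra.
have sk0 : 0 < s * k by nra.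
have c0 : 0 < mu / 60 by lra.
split.
- rewrite -subr_ge0.
  have -> : E - mu / 60 * I = (1 - mu/60) * V^+2 + (s^+2 * k * p) * V * Z
      + (s * k * (p * Q - mu/60)) * Z^+2 + (B - mu/60) * g.
    by rewrite /E /I; field.
  apply: addr_ge0; last by apply: mulr_ge0 => //; lra.
  apply: qf_ge0; first lra.
  have e1 : (s^+2 * k * p)^+2 = (s * k) * (s^+3 * k * p^+2) by field.
  have e2 : 4 * (1 - mu / 60) * (s * k * (p * Q - mu / 60)) = (s * k) * (4 * (1 - mu / 60) * (p * Q - mu / 60)) by field.
  rewrite e1 e2; apply: ler_wpM2l; first lra.
  have : 4 * (1 - mu / 60) * (p * Q - mu / 60) - s ^+ 3 * k * p ^+ 2 >= 4 * (p * T) - 4 * (mu/60) * (p * Q + 1).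
    have -> : 4 * (1 - mu / 60) * (p * Q - mu / 60) - s ^+ 3 * k * p ^+ 2 = 4 * (p * Q - s^+3 * k * p^+2 / 4) - 4 * (mu/60) * (p * Q + 1) + 4 * (mu/60)^+2 by field.
    rewrite hpQ; nra.
  nra.
- rewrite -subr_ge0.
  have -> : 6 * I - E = 5 * V^+2 + (- (s^+2 * k * p)) * V * Z
      + (s * k * (6 - p * Q)) * Z^+2 + (6 - B) * g.
    by rewrite /E /I; field.
  apply: addr_ge0; last by apply: mulr_ge0 => //; lra.
  apply: qf_ge0; first lra.
  have e1 : (- (s^+2 * k * p))^+2 = (s * k) * (s^+3 * k * p^+2) by field.
  have e2 : 4 * 5 * (s * k * (6 - p * Q)) = (s * k) * (20 * (6 - p * Q)) by field.
  rewrite e1 e2; apply: ler_wpM2l; first lra.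
  lra.
Qed.
End Alg.

Section Pointwise.
Context (R : realType).
Lemma le_eq_trans (a b c d : R) : a = b -> b <= c -> c = d -> a <= d.
Proof. by move=> -> h <-. Qed.
Lemma pointwise (f : R -> R) (s u r k mu X Y g : R) :
  0 < s <= 1 -> u < 0 -> 0 < k -> k <= 4/3 - mu -> 0 < mu <= 2/3 ->
  1 - mu/4 <= k * f r <= 1 + mu/4 -> 0 <= g -> r * (- u) = s * k ->
  mu/60 * I_dens u r X Y g <= E_dens f s u r X Y g /\
  E_dens f s u r X Y g <= 6 * I_dens u r X Y g.
Proof.
move=> hs u0 k0 hk hmu hp g0 hr.
have s0 : s != 0 by case/andP: hs => h _; exact: lt0r_neq0.
have w0 : - u != 0 by rewrite oppr_eq0 ltr0_neq0.
have hu : u != 0 by rewrite ltr0_neq0.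
have := core (- u * X) (Y / (- u)) hs k0 hk hmu hp g0.
rewrite /E_dens /I_dens (negbTE s0) ltr0_norm //.
move: (f r) => F.
have -> : r = s * k / (- u) by rewrite -hr mulfK.
move=> /= [h1 h2]; split.
- apply: (le_eq_trans _ h1).
  + by field; rewrite ?hu ?s0.
  + by field; rewrite ?hu ?s0.
- apply: (le_eq_trans _ h2).
  + by field; rewrite ?hu ?s0.
  + by field; rewrite ?hu ?s0.
Qed.
End Pointwise.

Section Cont.
Context (R : realType).

Lemma geom_half (n : nat) : \sum_(k < n) (2^-1 : R) ^+ k = 2 - 2 * (2^-1) ^+ n.
Proof.
elim: n => [|n IH]; first by rewrite big_ord0 expr0 mulr1 subrr.
rewrite big_ord_recr /= IH exprS.
by field.
Qed.

Lemma andP_lem (x y : R) : 0 < x -> x < y -> 0 <= x < y.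
Proof. by move=> h1 h2; rewrite (ltW h1) h2. Qed.

Lemma andP_lem2 (x y : R) : 0 <= x -> x < y -> 0 <= x < y.
Proof. by move=> h1 h2; rewrite h1 h2. Qed.

Lemma f_cont0 (a : R) (f : R -> R) : 0 < a -> analytic_on_0a f a ->
  forall e, 0 < e -> exists2 d, 0 < d & forall x, 0 <= x < d -> `|f x - f 0| <= e.
Proof.
move=> a0 /(_ 0); rewrite lexx a0 => /(_ isT) [d d0 [c H]] e e0.
set h0 := Num.min d a / 2.
have h00 : 0 < h0 by rewrite /h0 divr_gt0 // lt_min d0 a0.
have m1 : Num.min d a <= d by rewrite ge_min lexx.
have m2 : Num.min d a <= a by rewrite ge_min lexx orbT.
have h0d : h0 < d by rewrite /h0; lra.
have h0a : h0 < a by rewrite /h0; lra.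
have Hh0 := H h0 (andP_lem h00 h0a).
rewrite subr0 gtr0_norm // in Hh0; have {Hh0}Hh0 := Hh0 h0d.
set u := fun k => c k * h0 ^+ k.
have cs : cvgn (series u).
  rewrite (_ : series u = fun n => \sum_(k < n) u k); last first.
    by apply/funext => n; rewrite /series /= big_mkord.
  exact: cvgP Hh0.
have u0 := cvg_series_cvg_0 cs.
have : cvgn u by exact: cvgP u0.
move/cvg_seq_bounded => hb.
have [M HM] : exists M, forall k, `|u k| <= M.
  move: hb; rewrite /bounded_near => -[M [_ HM]].
  by exists (M + 1) => k; apply: (HM (M + 1)); [lra| ].
have HMk : forall k, `|c k| * h0 ^+ k <= M.
  move=> k; have := HM k; rewrite /u normrM normrX (gtr0_norm h00). done.
have M0 : 0 <= M by apply: le_trans (HMk 0%N); rewrite expr0 mulr1.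
set del := Num.min (h0 / 2) (e * h0 / (4 * (M + 1))).
have del0 : 0 < del.
  have e1 : 0 < h0 / 2 by lra.
  have e2 : 0 < e * h0 / (4 * (M + 1)) by apply: divr_gt0; [exact: mulr_gt0|lra].
  by rewrite lt_min e1 e2.
exists del => // x /andP[x0 xd].
have xd1 : x <= h0 / 2 by apply: (le_trans (ltW xd)); rewrite ge_min lexx.
have xd2 : x <= e * h0 / (4 * (M + 1)) by apply: (le_trans (ltW xd)); rewrite ge_min lexx orbT.
set q := x / h0.
have q0 : 0 <= q by rewrite /q divr_ge0 // ltW.
have q1 : q <= 2^-1 by rewrite /q ler_pdivrMr //; lra.
have xq : x = q * h0 by rewrite /q divfK // lt0r_neq0.
have xa : x < a by lra.
have Hx := H x (andP_lem2 x0 xa).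
rewrite subr0 ger0_norm // in Hx; have xd3 : x < d by lra.
have {Hx}Hx := Hx xd3.
have H0 := H 0 (andP_lem2 (lexx 0) a0).
rewrite subrr normr0 in H0; have {H0}H0 := H0 d0.
have Hd : (fun n : nat => `|\sum_(k < n) c k * x ^+ k - \sum_(k < n) c k * 0 ^+ k|) @ \oo --> `|f x - f 0|.
  by apply: cvg_norm; apply: cvgB.
apply: (cvgr_to_le Hd); apply: nearW => n /=.
rewrite -sumrB.
apply: (le_trans (ler_norm_sum _ _ _)).
apply: (le_trans (y := \sum_(k < n) (2 * q * M) * (2^-1) ^+ k)).
  apply: ler_sum => -[[|k] _] _ /=.
    by rewrite !expr0 subrr normr0 mulr1; apply: mulr_ge0 => //; lra.
  rewrite expr0n /= mulr0 subr0 normrM (ger0_norm (exprn_ge0 _ x0)) xq exprMn.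
  have hq : q ^+ k <= (2^-1) ^+ k by apply: lerXn2r; rewrite ?inE ?nnegrE //; lra.
  have hc := HMk k.+1.
  have e1 : `|c k.+1| * (q ^+ k.+1 * h0 ^+ k.+1) = (`|c k.+1| * h0 ^+ k.+1) * (q * q ^+ k) by rewrite exprS; ring.
  have e2 : 2 * q * M * 2^-1 ^+ k.+1 = M * (q * 2^-1 ^+ k) by rewrite exprS; field.
  rewrite e1 e2; apply: ler_pM => //.
  - by apply: mulr_ge0 => //; apply: exprn_ge0; exact: ltW.
  - by apply: mulr_ge0 => //; exact: exprn_ge0.
  - by apply: ler_wpM2l.
rewrite -mulr_sumr geom_half.
have : 0 <= 2 * (2^-1 : R) ^+ n by apply: mulr_ge0 => //; apply: exprn_ge0.
have : 2 * q * M <= e / 2.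
  have hq : q * (4 * (M + 1)) <= e.
    have : x * (4 * (M + 1)) <= e * h0.
      by move: xd2; rewrite ler_pdivlMr //; lra.
    rewrite xq => h; have : (q * (4 * (M + 1))) * h0 <= e * h0 by rewrite -mulrA (mulrC _ h0) mulrA.
    by rewrite ler_pM2r.
  nra.
move=> h1 h2.
have h3 : 0 <= 2 * q * M by apply: mulr_ge0 => //; lra.
nra.
Qed.
End Cont.

Section RS.
Context (R : realType).
Variables (a : R) (f rstar : R -> R).
Hypothesis a0 : 0 < a.
Hypothesis fpos : forall x, 0 <= x < a -> 0 < f x.
Hypothesis hder : forall r, a^-1 < r -> is_derive r 1 rstar (f r^-1)^-1.

Lemma mvt_rstar x y : a^-1 < x -> x < y ->
  exists2 z, x < z < y & rstar y - rstar x = (f z^-1)^-1 * (y - x).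
Proof.
move=> ax xy.
have h1 : forall z, z \in `]x, y[ -> is_derive z 1 rstar ((fun r => (f r^-1)^-1) z).
  move=> z; rewrite in_itv /= => /andP[xz _]; apply: hder; exact: lt_trans xz.
have h2 : {within `[x, y], continuous rstar}.
  apply: derivable_within_continuous => z; rewrite in_itv /= => /andP[xz _].
  have : a^-1 < z by exact: lt_le_trans xz.
  by move/hder => h; exact: (@ex_derive _ _ _ _ _ _ _ h).
have [z zi ->] := MVT xy h1 h2.
by exists z => //; move: zi; rewrite in_itv.
Qed.

Lemma Dpos z : a^-1 < z -> 0 < (f z^-1)^-1.
Proof.
move=> az; rewrite invr_gt0; apply: fpos.
have z0 : 0 < z by apply: lt_trans az; rewrite invr_gt0.
rewrite invr_ge0 (ltW z0) /= -(invrK a) ltf_pV2 ?posrE ?invr_gt0 //.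
Qed.

Lemma rstar_mono x y : a^-1 < x -> x <= y -> rstar x <= rstar y.
Proof.
move=> ax; rewrite le_eqVlt => /predU1P[-> //|xy].
have [z /andP[xz _] h] := mvt_rstar ax xy.
rewrite -subr_ge0 h; apply: mulr_ge0; first by apply/ltW/Dpos; exact: lt_trans xz.
by rewrite subr_ge0 ltW.
Qed.

Lemma inv_close (m F eps eta : R) : 0 < m -> 0 < eta -> eps <= m / 2 -> eps <= eta * m ^+ 2 / 6 ->
  `|F - m| <= eps -> `|F^-1 - m^-1| <= eta / 3.
Proof.
move=> m0 eta0 e1 e2; rewrite ler_norml => /andP[h1 h2].
have F0 : 0 < F by lra.
have -> : F^-1 - m^-1 = (m - F) / (F * m) by field; rewrite ?lt0r_neq0.
have Fm0 : 0 < F * m by exact: mulr_gt0.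
rewrite normrM normfV (gtr0_norm Fm0) ler_pdivrMr //.
have : `|m - F| <= eps by rewrite distrC ler_norml; apply/andP; lra.
have : m / 2 * m <= F * m by rewrite ler_pM2r //; lra.
nra.
Qed.

Hypothesis hcont : forall e, 0 < e -> exists2 d, 0 < d & forall x, 0 <= x < d -> `|f x - f 0| <= e.
Hypothesis f00 : 0 < f 0.

Lemma rstar_asym eta : 0 < eta -> exists2 rho1, a^-1 < rho1 &
  forall rho, rho1 <= rho -> `|rstar rho / rho - (f 0)^-1| <= eta /\ `|f rho^-1 - f 0| <= eta.
Proof.
move=> eta0; set m := f 0; have m0 : 0 < m := f00.
set eps := Num.min (m / 2) (Num.min eta (eta * m ^+ 2 / 6)).
have eps0 : 0 < eps.
  rewrite !lt_min eta0 /=; apply/andP; split; first lra.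
  by apply: divr_gt0 => //; apply: mulr_gt0 => //; apply: exprn_gt0.
have e1 : eps <= m / 2 by rewrite ge_min lexx.
have e2 : eps <= eta by rewrite ge_min ge_min lexx orbT.
have e3 : eps <= eta * m ^+ 2 / 6 by rewrite ge_min ge_min lexx !orbT.
have [dl dl0 Hd] := hcont eps0.
set dl' := Num.min dl a.
have d1 : dl' <= dl by rewrite ge_min lexx.
have d2 : dl' <= a by rewrite ge_min lexx orbT.
have d0 : 0 < dl' by rewrite lt_min dl0 a0.
set rho0 := 2 / dl'.
have r00 : 0 < rho0 by apply: divr_gt0.
have ar0 : a^-1 < rho0.
  rewrite /rho0 ltr_pdivlMr //.
  have : a^-1 * dl' <= 1 by rewrite -(mulVf (lt0r_neq0 a0)) ler_wpM2l // invr_ge0 ltW.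
  lra.
have Hf : forall rho, rho0 <= rho -> `|f rho^-1 - m| <= eps.
  move=> rho hr; apply: Hd.
  have rh0 : 0 < rho by exact: lt_le_trans hr.
  rewrite invr_ge0 ltW //=.
  apply: (le_lt_trans (y := rho0^-1)); first by rewrite lef_pV2 ?posrE.
  by rewrite /rho0 invf_div ltr_pdivrMr //; lra.
set A := rstar rho0.
exists (Num.max (rho0 + 1) (3 * (`|A| + rho0 / m) / eta)).
  by apply: (lt_le_trans ar0); rewrite le_max; apply/orP; left; lra.
move=> rho; rewrite ge_max => /andP[hr1 hr2].
have hr : rho0 < rho by lra.
have rh0 : 0 < rho by exact: lt_trans hr.
split; last by apply: le_trans (Hf _ (ltW hr)) e2.
have [z /andP[z1 z2] hz] := mvt_rstar ar0 hr.
have hK : `|(f z^-1)^-1 - m^-1| <= eta / 3.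
  apply: (inv_close (eps := eps)) => //; apply: Hf; exact: ltW.
set K := (f z^-1)^-1 - m^-1.
have hz' : rstar rho = A + (K + m^-1) * (rho - rho0) by rewrite /K subrK -hz addrC subrK.
have hb : `|A| + rho0 / m <= eta * rho / 3.
  move: hr2; rewrite ler_pdivrMr //; lra.
have hX : (rstar rho / rho - m^-1) * rho = (A - rho0 / m) + K * (rho - rho0).
  by rewrite hz'; field; rewrite ?lt0r_neq0.
have hn : `|rstar rho / rho - m^-1| * rho <= eta * rho.
  rewrite -(gtr0_norm rh0) -normrM (gtr0_norm rh0) hX.
  apply: (le_trans (ler_normD _ _)).
  have hrr : 0 < rho - rho0 by rewrite subr_gt0.
  rewrite normrM (gtr0_norm hrr).
  have h1 : `|A - rho0 / m| <= `|A| + rho0 / m.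
    have q0 : 0 <= rho0 / m by apply: divr_ge0; exact: ltW.
    by apply: (le_trans (ler_normB _ _)); rewrite (ger0_norm q0).
  have h2 : `|K| * (rho - rho0) <= eta / 3 * (rho - rho0) by rewrite ler_pM2r.
  have : 0 < rho0 by [].
  nra.
by rewrite -(ler_pM2r rh0).
Qed.
End RS.

Section Aux.
Context (R : realType).
Lemma andP_lem' (x y : R) : 0 < x -> x <= y -> 0 < x <= y.
Proof. by move=> h1 h2; rewrite h1 h2. Qed.
End Aux.

Section Grad.
Context (R : realType).
Lemma grad_ge0 (w1 w2 w3 g1 g2 g3 : R) : w1 ^+ 2 + w2 ^+ 2 + w3 ^+ 2 = 1 ->
  0 <= g1 ^+ 2 + g2 ^+ 2 + g3 ^+ 2 - (w1 * g1 + w2 * g2 + w3 * g3) ^+ 2.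
Proof.
move=> hw.
have -> : g1 ^+ 2 + g2 ^+ 2 + g3 ^+ 2 - (w1 * g1 + w2 * g2 + w3 * g3) ^+ 2 =
  (w1 ^+ 2 + w2 ^+ 2 + w3 ^+ 2) * (g1 ^+ 2 + g2 ^+ 2 + g3 ^+ 2) - (w1 * g1 + w2 * g2 + w3 * g3) ^+ 2.
  by rewrite hw mul1r.
have -> : (w1 ^+ 2 + w2 ^+ 2 + w3 ^+ 2) * (g1 ^+ 2 + g2 ^+ 2 + g3 ^+ 2) - (w1 * g1 + w2 * g2 + w3 * g3) ^+ 2
  = (w1 * g2 - w2 * g1) ^+ 2 + (w1 * g3 - w3 * g1) ^+ 2 + (w2 * g3 - w3 * g2) ^+ 2 by ring.
by rewrite !addr_ge0 // sqr_ge0.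
Qed.

Lemma grad_S2_ge0 (phi : 'rV[R]_5 -> R) u r w1 w2 w3 : w1 ^+ 2 + w2 ^+ 2 + w3 ^+ 2 = 1 ->
  0 <= grad_S2_sq phi u r w1 w2 w3.
Proof. by move=> hw; rewrite /grad_S2_sq; exact: grad_ge0. Qed.
End Grad.

Unset Implicit Arguments.

Theorem proposition2 (R : realType) (a : R) (f : R -> R) (rstar : R -> R) :
  0 < a ->
  (forall x, 0 <= x < a -> 0 < f x) ->
  analytic_on_0a f a ->
  (forall r, a^-1 < r -> is_derive r 1 rstar (f r^-1)^-1) ->
  3 / 4 < f 0 ->
  exists U : R, U < 0 /\ exists c C : R, 0 < c /\ c <= C /\
    forall (u0 s : R) (Rs : R -> R) (phi : 'rV[R]_5 -> R),
      u0 < U -> 0 <= s <= 1 ->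
      H_param a rstar s u0 Rs ->
      smooth phi ->
      ((c%:E * I_norm u0 Rs phi <= energy f s u0 Rs phi)%E /\
       (energy f s u0 Rs phi <= C%:E * I_norm u0 Rs phi)%E).
Proof.
move=> a0 fpos han hder hf0.
have m0 : 0 < f 0 by lra.
pose k0 := (f 0)^-1.
have k0pos : 0 < k0 by rewrite invr_gt0.
have k0m : k0 * f 0 = 1 by rewrite mulVf // lt0r_neq0.
have k0lt : k0 < 4/3 by nra.
pose mu := (4/3 - k0) / 2.
have mu0 : 0 < mu by rewrite /mu; lra.
have mu1 : mu <= 2/3 by rewrite /mu; lra.
pose eta := Num.min mu (mu / (4 * (f 0 + 1 + k0))).
have eta0 : 0 < eta by rewrite lt_min mu0 /=; apply: divr_gt0 => //; lra.
have eta1 : eta <= mu by rewrite ge_min lexx.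
have eta2 : eta * (4 * (f 0 + 1 + k0)) <= mu.
  have : eta <= mu / (4 * (f 0 + 1 + k0)) by rewrite ge_min lexx orbT.
  by rewrite ler_pdivlMr //; lra.
have hcont := f_cont0 a0 han.
have [rho1 ar1 Has] := rstar_asym a0 hder hcont m0 eta0.
exists (- (`|rstar rho1| + 1)); split; first by have := normr_ge0 (rstar rho1); lra.
exists (mu / 60), 6; split; first lra; split; first lra.
move=> u0 s Rs phi hu0 hs hH _.
have PW : forall u w1 w2 w3, u < u0 -> w1 ^+ 2 + w2 ^+ 2 + w3 ^+ 2 = 1 ->
    let X := d_u phi u (Rs u) w1 w2 w3 in
    let Y := d_R phi u (Rs u) w1 w2 w3 in
    let g := grad_S2_sq phi u (Rs u) w1 w2 w3 in
    [/\ 0 <= I_dens u (Rs u) X Y g,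
        mu / 60 * I_dens u (Rs u) X Y g <= E_dens f s u (Rs u) X Y g &
        E_dens f s u (Rs u) X Y g <= 6 * I_dens u (Rs u) X Y g].
  move=> u w1 w2 w3 uu0 hw X Y g.
  have g0 : 0 <= g by exact: grad_S2_ge0.
  have un : u < 0 by have := normr_ge0 (rstar rho1); lra.
  have Inn : 0 <= I_dens u (Rs u) X Y g.
    rewrite /I_dens; apply: addr_ge0 => //; apply: addr_ge0; first by apply: mulr_ge0; exact: sqr_ge0.
    apply: mulr_ge0; last exact: sqr_ge0.
    apply: divr_ge0 => //.
    move: hH; rewrite /H_param; case: ifP => _ hH.
      by rewrite hH.
    by have [/andP[h _] _] := hH u uu0; exact: ltW.
  case: (eqVneq s 0) => [s0|s0].
    move: hH; rewrite /H_param s0 eqxx => hH.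
    move: Inn; rewrite /E_dens /I_dens eqxx (hH u uu0) mul0r mul0r addr0 => Inn.
    split => //; nra.
  move: hH; rewrite /H_param (negbTE s0) => hH.
  have [/andP[r0 ra] hu] := hH u uu0.
  move: Inn; set r := Rs u => Inn.
  have spos : 0 < s by case/andP: hs => h _; rewrite lt0r s0 h.
  have s1 : s <= 1 by case/andP: hs.
  have ar : a^-1 < r^-1 by rewrite ltf_pV2 ?posrE.
  have hrs : rstar r^-1 = - u / s.
    by rewrite hu; field.
  have hrho : rho1 <= r^-1.
    rewrite leNgt; apply/negP => hlt.
    have := rstar_mono a0 fpos hder ar (ltW hlt).
    rewrite hrs => hm.
    have : - u <= - u / s by rewrite ler_pdivlMr //; nra.
    have := ler_norm (rstar rho1).
    lra.
  have [h1 h2] := Has _ hrho.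
  rewrite invrK in h2.
  set k := rstar r^-1 / r^-1.
  have hk : k = - u / s * r by rewrite /k hrs invrK.
  have kpos : 0 < k.
    rewrite hk; apply: mulr_gt0 => //; apply: divr_gt0 => //; lra.
  move: h1 h2; rewrite -/k -/k0 !ler_norml => /andP[h1 h1'] /andP[h2 h2'].
  have hkF : 1 - mu / 4 <= k * f r <= 1 + mu / 4.
    have -> : k * f r = 1 + (k - k0) * f r + k0 * (f r - f 0) by rewrite -k0m; ring.
    apply/andP; split; nra.
  have kle : k <= 4/3 - mu.
    have mudef : mu = (4/3 - k0) / 2 by [].
    lra.
  have hkr : r * - u = s * k by rewrite hk; field; rewrite s0.
  have [l1 l2] := pointwise X Y (andP_lem' spos s1) un kpos kle (andP_lem' mu0 mu1) hkF g0 hkr.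
  by split.
split.
- rewrite /I_norm /energy -int_u_S2_scale; last 2 first.
  + lra.
  + by move=> u w1 w2 w3 uu0 hw; case: (PW u w1 w2 w3 uu0 hw).
  apply: int_u_S2_mono => u w1 w2 w3 uu0 hw.
  case: (PW u w1 w2 w3 uu0 hw) => h1 h2 h3; split => //.
  by apply: mulr_ge0 => //; lra.
- rewrite /I_norm /energy -int_u_S2_scale; last 2 first.
  + lra.
  + by move=> u w1 w2 w3 uu0 hw; case: (PW u w1 w2 w3 uu0 hw).
  apply: int_u_S2_mono => u w1 w2 w3 uu0 hw.
  case: (PW u w1 w2 w3 uu0 hw) => h1 h2 h3; split => //.
  apply: le_trans h2; by apply: mulr_ge0 => //; lra.
Qed.
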